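(* Let $S$ be a measurement scenario, $n\ge1$, and $F\colon\mathrm{Emp}(S)\to\mathrm{Emp}(\mathbf n)$ a function preserving convex combinations. Identify $\mathrm{Emp}(\mathbf n)$ with the set of probability distributions on $\{0,\dots,n-1\}$. Then $F$ is induced by a probabilistic procedure $S\to\mathbf n$ (i.e. $F=\mathrm{Emp}(f)$ for some probabilistic procedure $f$) if and only if there exist reals $r_1,\dots,r_m>0$ with $\sum_jr_j=1$ and functions $F_j\colon\mathcal E_S(X_S)\to\{0,\dots,n-1\}$ such that $F(\delta_s)=\sum_jr_j\delta_{F_j(s)}$ for all $s\in\mathcal E_S(X_S)$ and, for each $j$, the least subset $U_j\subseteq X_S$ such that $F_j$ factors through $\mathcal E_S(U_j)$ belongs to $\Sigma_S$.
   Context: A simplicial complex $\Sigma$ on a finite set $X$ is a family of subsets containing $\emptyset$ and all singletons, closed under subsets. A measurement scenario $S=(X_S,O_S,\Sigma_S)$: finite set $X_S$, finite non-empty outcome sets $O_{S,x}$, simplicial complex $\Sigma_S$ of contexts. $\mathcal E_S(U)=\prod_{x\in U}O_{S,x}$, restriction $s|_V$. An empirical model on $S$ is a family $(e_\sigma)_{\sigma\in\Sigma_S}$ of probability distributions on $\mathcal E_S(\sigma)$ with $e_\tau$ the marginal of $e_\sigma$ whenever $\tau\subseteq\sigma$; $\mathrm{Emp}(S)$ is the convex set of these; $\delta_s$ ($s\in\mathcal E_S(X_S)$) is the model with $(\delta_s)_\sigma$ the point mass at $s|_\sigma$. $\mathbf n$ is the scenario with one measurement $*$ and outcomes $\{0,\dots,n-1\}$;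 $\delta_k$ is the point mass at $k$. $F_j$ factors through $\mathcal E_S(U)$ if $F_j(s)=\tilde F(s|_U)$ for some $\tilde F$ and all $s$ (a least such $U$ always exists). A simplicial relation from $\Sigma$ (on $X$) to $\Delta$ (on $Y$) is a relation $R\subseteq X\times Y$ with $R(\sigma)\in\Delta$ for all $\sigma\in\Sigma$. A deterministic procedure $f\colon S\to T$ is a pair $(\pi_f,\alpha_f)$ with $\pi_f$ a simplicial relation from $\Sigma_T$ to $\Sigma_S$ and $\alpha_{f,x}\colon\mathcal E_S(\pi_f(x))\to O_{T,x}$; it acts by $(\mathrm{Emp}(f)e)_\sigma=(\alpha_{f,\sigma})_*(e_{\pi_f(\sigma)})$ with $\alpha_{f,\sigma}(s)=(\alpha_{f,x}(s|_{\pi_f(x)}))_{x\in\sigma}$. A probabilistic procedure is a finitely supported probability distribution $\sum_ir_if_i$ on deterministic procedures, acting by $\mathrm{Emp}(\sum r_if_i)e=\sum r_i\mathrm{Emp}(f_i)e$. *)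

(* Defs.v *)
From HB Require Import structures.
From mathcomp Require Import all_boot all_order all_algebra.
From mathcomp Require Import reals.
Set Implicit Arguments.
Unset Strict Implicit.
Unset Printing Implicit Defensive.
Import Order.TTheory GRing.Theory Num.Theory.
Local Open Scope ring_scope.

Record scenario := Scenario {
  sc_X : finType;
  sc_O : sc_X -> finType;
  sc_Sigma : {set {set sc_X}};
  sc_O_nonempty : forall x, (0 < #|sc_O x|)%N;
  sc_Sigma0 : set0 \in sc_Sigma;
  sc_Sigma1 : forall x, [set x] \in sc_Sigma;
  sc_Sigma_sub : forall s t : {set sc_X}, s \in sc_Sigma -> t \subset s -> t \in sc_Sigma
}.

(* Partial sections: an element of E_S(U) is represented as a dependent
   finite function that is [Some _] exactly on U and [None] elsewhere. *)
Definition sec (S : scenario) := {dffun forall x : sc_X S, option (sc_O x)}.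

Definition dom (S : scenario) (s : sec S) : {set sc_X S} :=
  [set x | s x != None].

Definition restr (S : scenario) (V : {set sc_X S}) (s : sec S) : sec S :=
  [ffun x => if x \in V then s x else None].

Definition global (S : scenario) (s : sec S) : bool := dom s == setT.

Notation model R S := {ffun {set sc_X S} -> {ffun sec S -> R}}.

Definition mconv (R : realType) (S : scenario) (a : R) (e1 e2 : model R S)
  : model R S :=
  [ffun sigma => [ffun t => a * e1 sigma t + (1 - a) * e2 sigma t]].

Definition is_emp (R : realType) (S : scenario) (e : model R S) : Prop :=
  [/\ forall sigma, sigma \notin sc_Sigma S -> e sigma = 0,
      forall sigma s, sigma \in sc_Sigma S -> 0 <= e sigma s,
      forall sigma s, sigma \in sc_Sigma S -> dom s != sigma -> e sigma s = 0,
      forall sigma, sigma \in sc_Sigma S -> \sum_s e sigma s = 1 &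
      forall (sigma tau : {set sc_X S}) (t : sec S), sigma \in sc_Sigma S ->
        tau \subset sigma ->
        e tau t = \sum_(s | restr tau s == t) e sigma s].

Definition delta (R : realType) (S : scenario) (s : sec S) : model R S :=
  [ffun sigma => [ffun t =>
     if sigma \in sc_Sigma S then (restr sigma s == t)%:R else 0]].

(* The simplicial relation pi_f from
   Sigma_T to Sigma_S is given as its relational image of points,
   pi x = pi_f({x}); alpha x is alpha_{f,x}, only ever applied to sections
   with domain pi x. *)
Record dproc (S T : scenario) := DProc {
  dp_pi : sc_X T -> {set sc_X S};
  dp_alpha : forall x : sc_X T, sec S -> sc_O x
}.

Definition dp_piset (S T : scenario) (f : dproc S T) (sigma : {set sc_X T})
  : {set sc_X S} := \bigcup_(x in sigma) dp_pi f x.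

Definition is_dproc (S T : scenario) (f : dproc S T) : Prop :=
  forall sigma, sigma \in sc_Sigma T -> dp_piset f sigma \in sc_Sigma S.

Definition dp_apply (S T : scenario) (f : dproc S T) (sigma : {set sc_X T})
  (s : sec S) : sec T :=
  [ffun x => if x \in sigma then Some (dp_alpha f x (restr (dp_pi f x) s))
             else None].

Definition emp_det (R : realType) (S T : scenario) (f : dproc S T)
  (e : model R S) : model R T :=
  [ffun sigma => [ffun t =>
     if sigma \in sc_Sigma T then
       \sum_(s | dp_apply f sigma s == t) e (dp_piset f sigma) s
     else 0]].

Definition is_pproc (R : realType) (S T : scenario) (m : nat)
  (r : 'I_m -> R) (f : 'I_m -> dproc S T) : Prop :=
  [/\ forall i, 0 <= r i, \sum_i r i = 1 & forall i, is_dproc (f i)].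

Definition emp_prob (R : realType) (S T : scenario) (m : nat)
  (r : 'I_m -> R) (f : 'I_m -> dproc S T) (e : model R S) : model R T :=
  [ffun sigma => [ffun t => \sum_i r i * emp_det (f i) e sigma t]].

Section ScN.
Variable n : nat.
Hypothesis hn : (0 < n)%N.
Definition scn_O (n : nat) : unit -> finType := fun _ => 'I_n.
Lemma scn_O_nonempty : forall x : unit, (0 < #|scn_O n x|)%N.
Proof. by move=> x; rewrite /scn_O card_ord hn. Qed.
Lemma scn_Sigma0 : set0 \in [set: {set unit}].
Proof. by rewrite inE. Qed.
Lemma scn_Sigma1 : forall x : unit, [set x] \in [set: {set unit}].
Proof. by move=> x; rewrite inE. Qed.
Lemma scn_Sigma_sub : forall s t : {set unit},
  s \in [set: {set unit}] -> t \subset s -> t \in [set: {set unit}].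
Proof. by move=> s t _ _; rewrite inE. Qed.
Definition scn : scenario :=
  @Scenario unit (scn_O n) [set: {set unit}] scn_O_nonempty scn_Sigma0
    scn_Sigma1 scn_Sigma_sub.
End ScN.

Definition scn_sec (n : nat) (hn : (0 < n)%N) (k : 'I_n) : sec (scn hn) :=
  [ffun x : unit => Some (k : scn_O n x)].

Definition emp_to_dist (R : realType) (n : nat) (hn : (0 < n)%N)
  (e : model R (scn hn)) : {ffun 'I_n -> R} :=
  [ffun k => e [set tt] (scn_sec hn k)].

Definition factors_through (S : scenario) (A : Type) (G : sec S -> A)
  (U : {set sc_X S}) : Prop :=
  forall s s', global s -> global s' -> restr U s = restr U s' -> G s = G s'.

Definition least_factor_set (S : scenario) (A : Type) (G : sec S -> A)
  (U : {set sc_X S}) : Prop :=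
  factors_through G U /\ forall V, factors_through G V -> U \subset V.

Definition is_dist (R : realType) (n : nat) (p : {ffun 'I_n -> R}) : Prop :=
  (forall k, 0 <= p k) /\ \sum_k p k = 1.

(* Main.v *)
Require Import Defs.
From HB Require Import structures.
From mathcomp Require Import all_boot all_order all_algebra.
From mathcomp Require Import reals.
From mathcomp Require Import ring lra.
From Stdlib Require Import Classical ClassicalEpsilon.
Import Order.TTheory GRing.Theory Num.Theory.
Local Open Scope ring_scope.
Set Implicit Arguments.
Unset Strict Implicit.

Definition glue (S : scenario) (V : {set sc_X S}) (u o : sec S) : sec S :=
  [ffun x => if x \in V then u x else o x].

Lemma restrE (S : scenario) V (s : sec S) x : restr V s x = if x \in V then s x else None.
Proof. by rewrite /restr ffunE. Qed.
Lemma glueE (S : scenario) V (u o : sec S) x : glue V u o x = if x \in V then u x else o x.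
Proof. by rewrite /glue ffunE. Qed.

Lemma globalP (S : scenario) (s : sec S) : reflect (forall x, s x != None) (global s).
Proof.
apply: (iffP eqP) => [H x|H].
  have : x \in dom s by rewrite H inE.
  by rewrite inE.
by apply/setP => x; rewrite !inE H.
Qed.

Lemma dom_restr (S : scenario) V (s : sec S) : global s -> dom (restr V s) = V.
Proof.
move/globalP=> H; apply/setP => x; rewrite inE restrE.
by case: (x \in V) => //; rewrite H.
Qed.

Lemma restr_restr (S : scenario) (U V : {set sc_X S}) (s : sec S) : U \subset V -> restr U (restr V s) = restr U s.
Proof.
move=> /subsetP H; apply/ffunP => x; rewrite !restrE.
by case: ifP => // /H ->.
Qed.

Lemma restr_id (S : scenario) (U : {set sc_X S}) (s : sec S) : restr U (restr U s) = restr U s.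
Proof. exact: restr_restr. Qed.

Lemma glue_global (S : scenario) V (u o : sec S) : global u -> global o -> global (glue V u o).
Proof.
move=> /globalP Hu /globalP Ho; apply/globalP => x; rewrite glueE; by case: ifP.
Qed.

Definition o0 (S : scenario) : sec S := [ffun x => [pick o : sc_O x]].

Lemma o0_global S : global (o0 S).
Proof.
apply/globalP => x; rewrite /o0 ffunE; case: pickP => // H.
by have := sc_O_nonempty x; rewrite (eq_card0 H).
Qed.

Lemma dom_restrI (S : scenario) V (s : sec S) : dom (restr V s) = V :&: dom s.
Proof. by apply/setP => x; rewrite !inE restrE; case: (x \in V). Qed.

Lemma restr_eqP (S : scenario) (V : {set sc_X S}) (a b : sec S) :
  reflect (forall x, x \in V -> a x = b x) (restr V a == restr V b).
Proof.
apply: (iffP eqP) => [H x xV|H].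
  by have := congr1 (fun f : sec S => f x) H; rewrite !restrE xV.
by apply/ffunP => x; rewrite !restrE; case: ifP => // /H.
Qed.

Lemma restr_dom (S : scenario) (t : sec S) : restr (dom t) t = t.
Proof.
apply/ffunP => x; rewrite restrE inE; case: ifP => //.
by move/negbT/negPn/eqP->.
Qed.

Definition marg (R : realType) (S : scenario) (w : sec S -> R) (sigma : {set sc_X S})
  (t : sec S) : R := \sum_(s | global s && (restr sigma s == t)) w s.

Lemma marg_dom (R : realType) (S : scenario) (w : sec S -> R) sigma t :
  dom t != sigma -> marg w sigma t = 0.
Proof.
move=> H; rewrite /marg big1 // => s /andP [gs /eqP rs].
by move: H; rewrite -rs dom_restr // eqxx.
Qed.

Lemma marg_marg (R : realType) (S : scenario) (w : sec S -> R)
  (rho sigma : {set sc_X S}) t : rho \subset sigma ->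
  \sum_(u | restr rho u == t) marg w sigma u = marg w rho t.
Proof.
move=> rs; rewrite /marg [RHS](partition_big (restr sigma) (fun u => restr rho u == t)).
    apply: eq_bigr => u /eqP ru; apply: eq_bigl => s.
  case: (boolP (restr sigma s == u)) => [/eqP su|]; last by rewrite !andbF.
  by rewrite !andbT -ru -su restr_restr // eqxx andbT.
by move=> s /andP [_ /eqP <-]; rewrite restr_restr.
Qed.

Definition dd (R : realType) (S : scenario) (e : model R S) (w : sec S -> R)
  (sigma : {set sc_X S}) (u : sec S) : R := e sigma u - marg w sigma u.

Lemma dd_dom (R : realType) (S : scenario) (e : model R S) w sigma u :
  is_emp e -> sigma \in sc_Sigma S -> dom u != sigma -> dd e w sigma u = 0.
Proof.
case=> _ _ H3 _ _ sS du; by rewrite /dd H3 ?marg_dom ?subrr.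
Qed.

Lemma dd_marg0 (R : realType) (S : scenario) (e : model R S) (w : sec S -> R) (sigma rho : {set sc_X S}) (t : sec S) :
  is_emp e -> sigma \in sc_Sigma S -> rho \subset sigma ->
  e rho t = marg w rho t ->
  \sum_(u | restr rho u == t) dd e w sigma u = 0.
Proof.
case=> _ _ _ _ H5 sS rs He.
by rewrite /dd sumrB -H5 // marg_marg // He subrr.
Qed.

Definition zc (R : realType) (S : scenario) (e : model R S) (w : sec S -> R)
  (sigma : {set sc_X S}) (o : sec S) (s : sec S) : R :=
  dd e w sigma (restr sigma s) * (restr (~: sigma) s == restr (~: sigma) o)%:R.

Lemma marg_zc_gen (R : realType) (S : scenario) (e : model R S) (w : sec S -> R)
  (sigma tau : {set sc_X S}) (o t : sec S) :
  is_emp e -> global o -> sigma \in sc_Sigma S ->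
  marg (zc e w sigma o) tau t =
  \sum_u dd e w sigma u * (restr tau (glue sigma u o) == t)%:R.
Proof.
move=> he go sS.
rewrite /marg /zc.
set P := fun s : sec S => (global s && (restr tau s == t)) && (restr (~: sigma) s == restr (~: sigma) o).
transitivity (\sum_(s | P s) dd e w sigma (restr sigma s)).
  rewrite [RHS]big_mkcondr; apply: eq_bigr => s _.
  by case: eqP => _; rewrite ?mulr1 ?mulr0.
rewrite (partition_big (restr sigma) predT) //=.
apply: eq_bigr => u _.
set g := glue sigma u o.
have gE : forall s, P s && (restr sigma s == u) -> s = g.
  move=> s /andP [/andP [_ /eqP c] /eqP su]; apply/ffunP => x.
  rewrite /g glueE; case: ifP => xs.
    by rewrite -su restrE xs.
  have := congr1 (fun f : sec S => f x) c; rewrite !restrE inE xs /= => ->.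
  done.
case: (boolP (dom u == sigma)) => du; last first.
  rewrite (dd_dom w he sS du) mul0r big1 // => s /andP [_ /eqP su].
  by rewrite su (dd_dom w he sS du).
have gg : global g.
  apply/globalP => x; rewrite /g glueE; case: ifP => xs.
    by move: xs; rewrite -(eqP du) inE.
  by move/globalP: go.
have rg : restr sigma g = u.
  by rewrite -[RHS]restr_dom (eqP du); apply/eqP/restr_eqP => x xs; rewrite /g glueE xs.
have cg : restr (~: sigma) g == restr (~: sigma) o.
  by apply/restr_eqP => y; rewrite inE /g glueE => /negbTE ->.
rewrite (eq_bigr (fun _ => dd e w sigma u)); last by move=> s /andP [_ /eqP ->].
case: (boolP (restr tau g == t)) => tg.
  rewrite mulr1 (big_pred1 g) //= => s; apply/idP/idP => [/gE ->|/eqP ->]; first exact: eqxx.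
  by rewrite /P /= gg tg cg rg eqxx.
rewrite mulr0 big_pred0 // => s; apply/negP => /[dup] /gE ->.
by rewrite /P /= (negbTE tg) andbF.
Qed.

Lemma sum_ind (R : realType) (T : finType) (f : T -> R) (P : pred T) :
  \sum_u f u * (P u)%:R = \sum_(u | P u) f u.
Proof. by rewrite [RHS]big_mkcond; apply: eq_bigr => u _; case: (P u); rewrite ?mulr1 ?mulr0. Qed.

Lemma restr_glue (S : scenario) (V : {set sc_X S}) (u o : sec S) :
  restr V (glue V u o) = restr V u.
Proof. by apply/eqP/restr_eqP => x xV; rewrite glueE xV. Qed.

Lemma restr_glue_eq (S : scenario) (sigma tau : {set sc_X S}) (u o t : sec S) :
  dom t = tau ->
  (restr tau (glue sigma u o) == t) =
  (restr (sigma :&: tau) u == restr (sigma :&: tau) t) &&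
  (restr (tau :\: sigma) o == restr (tau :\: sigma) t).
Proof.
move=> dt; rewrite -{1}(restr_dom t) dt.
apply/restr_eqP/andP => [H|[/restr_eqP H1 /restr_eqP H2] x xt].
  split; apply/restr_eqP => x; rewrite !inE.
    by case/andP => xs xt; rewrite -H // glueE xs.
  by case/andP => xs xt; rewrite -H // glueE (negbTE xs).
rewrite glueE; case: ifP => xs.
  by apply: H1; rewrite inE xs.
by apply: H2; rewrite !inE xs.
Qed.

Lemma marg_zc (R : realType) (S : scenario) (e : model R S) (w : sec S -> R)
  (sigma tau : {set sc_X S}) (o t : sec S) :
  is_emp e -> global o -> sigma \in sc_Sigma S -> tau \in sc_Sigma S ->
  dom t = tau -> (#|tau| <= #|sigma|)%N ->
  (forall rho t', rho \in sc_Sigma S -> (#|rho| < #|sigma|)%N -> dom t' = rho ->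
     e rho t' = marg w rho t') ->
  marg (zc e w sigma o) tau t = (sigma == tau)%:R * dd e w tau t.
Proof.
move=> he go sS tS dt ct IH.
rewrite marg_zc_gen //; case: eqP => [eq|ne].
  move: dt; rewrite -eq => dt.
  have rt : restr sigma t = t by rewrite -dt restr_dom.
  rewrite mul1r (bigD1 t) //= restr_glue rt eqxx mulr1 big1 ?addr0 //.
  move=> u ut; case: (boolP (dom u == sigma)) => du.
    by rewrite restr_glue -(eqP du) restr_dom (negbTE ut) mulr0.
  by rewrite (dd_dom w he sS du) mul0r.
rewrite mul0r.
under eq_bigr => u _ do rewrite restr_glue_eq // -mulnb natrM mulrA.
rewrite -big_distrl /= sum_ind.
set rho := sigma :&: tau.
have rs : rho \subset sigma by apply: subsetIl.
have rt : rho \subset tau by apply: subsetIr.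
rewrite (dd_marg0 he sS rs) ?mul0r //.
apply: IH.
- exact: sc_Sigma_sub sS rs.
- apply: proper_card; rewrite properEneq rs andbT.
  apply/negP => /eqP r_s; apply: ne; apply/eqP.
  by rewrite eqEcard ct andbT -r_s.
- by rewrite dom_restrI dt; apply/setIidPl.
Qed.

Lemma signed_k (R : realType) (S : scenario) (e : model R S) : is_emp e ->
  forall k, exists w : sec S -> R, forall sigma t, sigma \in sc_Sigma S ->
    (#|sigma| < k)%N -> dom t = sigma -> e sigma t = marg w sigma t.
Proof.
move=> he; elim=> [|k [w IH]].
  by exists (fun _ => 0) => sigma t _; rewrite ltn0.
pose o := o0 S.
exists (fun s => w s + \sum_(sigma | (sigma \in sc_Sigma S) && (#|sigma| == k))
   zc e w sigma o s).
move=> tau t tS; rewrite ltnS => ct dt.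
rewrite /marg big_split /= exchange_big /=.
rewrite -/(marg w tau t).
have -> : \sum_(sigma | (sigma \in sc_Sigma S) && (#|sigma| == k))
    \sum_(i | global i && (restr tau i == t)) zc e w sigma o i =
  \sum_(sigma | (sigma \in sc_Sigma S) && (#|sigma| == k))
    (sigma == tau)%:R * dd e w tau t.
  apply: eq_bigr => sigma /andP [sS /eqP cs].
  rewrite -/(marg (zc e w sigma o) tau t) marg_zc //.
  - exact: o0_global.
  - by rewrite cs.
  - by move=> rho t' rS; rewrite cs => crho dt'; apply: IH.
rewrite leq_eqVlt in ct; case/orP: ct => [/eqP ct|ct]; last first.
  rewrite big1 ?addr0; first exact: IH.
  move=> sigma /andP [_ /eqP cs]; case: eqP => [eq|]; last by rewrite mul0r.
  by move: ct; rewrite -eq cs ltnn.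
rewrite (bigD1 tau) /=; last by rewrite tS ct eqxx.
rewrite eqxx mul1r big1 ?addr0; first by rewrite /dd addrC subrK.
by move=> sigma /andP [_ /negbTE ->]; rewrite mul0r.
Qed.

Lemma signed (R : realType) (S : scenario) (e : model R S) : is_emp e ->
  exists w : sec S -> R, forall sigma t, sigma \in sc_Sigma S ->
    dom t = sigma -> e sigma t = marg w sigma t.
Proof.
move=> he; have [w Hw] := signed_k he (#|sc_X S|).+1.
exists w => sigma t sS dt; apply: Hw => //.
by rewrite ltnS max_card.
Qed.

Definition comb (R : realType) (S : scenario) (p : sec S -> R) : model R S :=
  [ffun sigma => [ffun t => \sum_s p s * delta R s sigma t]].

Lemma deltaE (R : realType) (S : scenario) (s : sec S) sigma t :
  delta R s sigma t = if sigma \in sc_Sigma S then (restr sigma s == t)%:R else 0.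
Proof. by rewrite /delta !ffunE. Qed.

Lemma combE (R : realType) (S : scenario) (p : sec S -> R) sigma t :
  comb p sigma t = \sum_s p s * delta R s sigma t.
Proof. by rewrite /comb !ffunE. Qed.

Lemma sum_pred1 (R : realType) (T : finType) (P : pred T) (a : T) :
  \sum_(u | P u) ((a == u)%:R : R) = (P a)%:R.
Proof.
rewrite big_mkcond (bigD1 a) //= eqxx big1 ?addr0; first by case: (P a).
by move=> u /negbTE au; rewrite eq_sym au; case: (P u).
Qed.

Lemma comb_emp (R : realType) (S : scenario) (p : sec S -> R) :
  (forall s, 0 <= p s) -> (forall s, ~~ global s -> p s = 0) -> \sum_s p s = 1 ->
  is_emp (comb p).
Proof.
move=> p0 pg p1; split.
- move=> sigma sS; apply/ffunP => t; rewrite combE ffunE big1 // => s _.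
  by rewrite deltaE (negbTE sS) mulr0.
- move=> sigma s sS; rewrite combE sumr_ge0 // => s' _.
  by rewrite deltaE sS mulr_ge0.
- move=> sigma t sS dt; rewrite combE big1 // => s _.
  case: (boolP (global s)) => gs; last by rewrite pg ?mul0r.
  rewrite deltaE sS; case: eqP => [rs|]; last by rewrite mulr0.
  by move: dt; rewrite -rs dom_restr ?eqxx.
- move=> sigma sS; under eq_bigr => t _ do rewrite combE.
  rewrite exchange_big /= -[RHS]p1; apply: eq_bigr => s _.
  rewrite -big_distrr /=.
  under eq_bigr => t _ do rewrite deltaE sS.
  by rewrite -(big_mkcond (fun _ => true)) sum_pred1 mulr1.
- move=> sigma tau t sS ts.
  have tS : tau \in sc_Sigma S by apply: sc_Sigma_sub sS ts.
  under [RHS]eq_bigr => u _ do rewrite combE.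
  rewrite combE exchange_big /=; apply: eq_bigr => s _.
  rewrite -big_distrr /=.
  rewrite [X in _ = _ * X](eq_bigr (fun u => (restr sigma s == u)%:R)); last first.
    by move=> u _; rewrite deltaE sS.
  by rewrite sum_pred1 deltaE tS restr_restr.
Qed.

Lemma delta_comb (R : realType) (S : scenario) (s0 : sec S) :
  delta R s0 = comb (fun s => (s == s0)%:R).
Proof.
apply/ffunP => sigma; apply/ffunP => t; rewrite combE (bigD1 s0) //= eqxx mul1r.
by rewrite big1 ?addr0 // => s /negbTE ->; rewrite mul0r.
Qed.

Lemma delta_emp (R : realType) (S : scenario) (s0 : sec S) :
  global s0 -> is_emp (delta R s0).
Proof.
move=> g0; rewrite delta_comb; apply: comb_emp.
- by move=> s; case: eqP.
- by move=> s; case: eqP => // ->; rewrite g0.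
- by rewrite (bigD1 s0) //= eqxx big1 ?addr0 // => s /negbTE ->.
Qed.

Definition Fconv (R : realType) (S : scenario) (n : nat) (F : model R S -> {ffun 'I_n -> R}) :=
  forall (e1 e2 : model R S) (a : R),
      is_emp e1 -> is_emp e2 -> 0 <= a -> a <= 1 ->
      F (mconv a e1 e2) = [ffun k => a * F e1 k + (1 - a) * F e2 k].

Definition pdrop (R : realType) (S : scenario) (p : sec S -> R) (s0 : sec S) :=
  fun s => if s == s0 then 0 else p s / (1 - p s0).

Lemma split_sum (R : realType) (S : scenario) (p : sec S -> R) (s0 : sec S) (X : sec S -> R) :
  p s0 != 1 ->
  \sum_s p s * X s = p s0 * X s0 + (1 - p s0) * \sum_s pdrop p s0 s * X s.
Proof.
move=> h; have h' : 1 - p s0 != 0 by rewrite subr_eq0 eq_sym.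
rewrite (bigD1 s0) //= [X in _ = _ + _ * X](bigD1 s0) //= /pdrop eqxx mul0r add0r.
congr (_ + _); rewrite big_distrr /=; apply: eq_bigr => s /negbTE ->.
by field.
Qed.

Lemma F_comb (R : realType) (S : scenario) (n : nat) (F : model R S -> {ffun 'I_n -> R})
  (hF : Fconv F) (N : nat) : forall p : sec S -> R,
  (#|[set s | p s != 0%R]| <= N)%N ->
  (forall s, 0 <= p s) -> (forall s, ~~ global s -> p s = 0) -> \sum_s p s = 1 ->
  F (comb p) = [ffun k => \sum_s p s * F (delta R s) k].
Proof.
elim: N => [|N IH] p cp p0 pg p1.
  move: cp; rewrite leqn0 cards_eq0 => /eqP/setP H.
  move: p1; rewrite big1 => [/eqP|s _]; first by rewrite eq_sym oner_eq0.
  by have := H s; rewrite !inE => /negbFE/eqP.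
case: (pickP [pred s | p s != 0]) => [s0 /= ps0|H]; last first.
  move: p1; rewrite big1 => [/eqP|s _]; first by rewrite eq_sym oner_eq0.
  by have := H s; rewrite /= => /negbFE/eqP.
have g0 : global s0 by apply/negPn/negP => /pg ps; rewrite ps eqxx in ps0.
have a1 : p s0 <= 1.
  rewrite -p1 (bigD1 s0) //= lerDl sumr_ge0 //.
case: (boolP (p s0 == 1)) => [/eqP pe1|pn1].
  have others : forall s, s != s0 -> p s = 0.
    move=> s ss0; apply/eqP; move: p1; rewrite (bigD1 s0) //= pe1 => /eqP.
    rewrite -subr_eq0 addrC addrK => /eqP/psumr_eq0P H; apply/eqP; apply: H => //.
  have ind : forall X : sec S -> R, \sum_s p s * X s = X s0.
    move=> X; rewrite (bigD1 s0) //= pe1 mul1r big1 ?addr0 // => s /others ->.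
    by rewrite mul0r.
  have -> : comb p = delta R s0.
    apply/ffunP => sigma; apply/ffunP => t; by rewrite combE ind.
  by apply/ffunP => k; rewrite ffunE ind.
set p' := pdrop p s0.
have a0 : 0 <= p s0 by [].
have b0 : 0 < 1 - p s0 by rewrite subr_gt0 lt_neqAle pn1 a1.
have p'0 : forall s, 0 <= p' s.
  by move=> s; rewrite /p' /pdrop; case: eqP => // _; rewrite divr_ge0 // ltW.
have p'g : forall s, ~~ global s -> p' s = 0.
  by move=> s gs; rewrite /p' /pdrop pg // mul0r; case: eqP.
have p'1 : \sum_s p' s = 1.
  apply: (mulfI (lt0r_neq0 b0)); rewrite mulr1.
  have := split_sum (fun _ => 1) pn1; rewrite -/p'.
  under eq_bigr => s _ do rewrite mulr1.
  under [X in _ = _ + _ * X -> _]eq_bigr => s _ do rewrite mulr1.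
  rewrite p1 mulr1 => H.
  by rewrite [in RHS]H addrAC subrr add0r.
have cp' : (#|[set s | p' s != 0%R]| <= N)%N.
  have sub : [set s | p' s != 0] \subset [set s | p s != 0] :\ s0.
    apply/subsetP => s; rewrite !inE /p' /pdrop; case: (eqVneq s s0) => [->|ne].
      by rewrite eqxx.
    by rewrite /=; apply: contraNN => /eqP ->; rewrite mul0r.
  rewrite -ltnS; apply: leq_ltn_trans (subset_leq_card sub) _.
  by rewrite -add1n (cardsD1 s0 [set s | p s != 0]) inE ps0 in cp.
have e' := comb_emp p'0 p'g p'1.
have -> : comb p = mconv (p s0) (delta R s0) (comb p').
  apply/ffunP => sigma; apply/ffunP => t.
  by rewrite /mconv !ffunE (split_sum _ pn1) deltaE.
rewrite hF // ?delta_emp //.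
apply/ffunP => k; rewrite !ffunE (split_sum _ pn1).
by rewrite (IH p' cp' p'0 p'g p'1) ffunE.
exact: delta_emp.
Qed.

Lemma sum_scale (R : realType) (T : finType) (f X : T -> R) (c : R) :
  \sum_s (f s / c) * X s = (\sum_s f s * X s) / c.
Proof. by rewrite mulr_suml; apply: eq_bigr => s _; rewrite mulrAC. Qed.

Lemma F_affine (R : realType) (S : scenario) (n : nat) (F : model R S -> {ffun 'I_n -> R})
  (hF : Fconv F) (w : sec S -> R) :
  (forall s, ~~ global s -> w s = 0) -> \sum_s w s = 1 -> is_emp (comb w) ->
  F (comb w) = [ffun k => \sum_s w s * F (delta R s) k].
Proof.
move=> wg w1 he.
pose wp := fun s => if 0 <= w s then w s else 0.
pose wn := fun s => if 0 <= w s then 0 else - w s.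
have wE : forall s, w s = wp s - wn s.
  by move=> s; rewrite /wp /wn; case: ifP; rewrite ?subr0 ?sub0r ?opprK.
have wp0 : forall s, 0 <= wp s by move=> s; rewrite /wp; case: ifP.
have wn0 : forall s, 0 <= wn s.
  by move=> s; rewrite /wn; case: ifP => // /negbT; rewrite -ltNge oppr_ge0 => /ltW.
have wpg : forall s, ~~ global s -> wp s = 0 by move=> s /wg; rewrite /wp => ->; rewrite lexx.
have wng : forall s, ~~ global s -> wn s = 0 by move=> s /wg; rewrite /wn => ->; rewrite lexx.
set c := \sum_s wn s.
have c0 : 0 <= c by apply: sumr_ge0.
have sp : \sum_s wp s = 1 + c.
  by rewrite -w1 /c -big_split /=; apply: eq_bigr => s _; rewrite wE subrK.
case: (eqVneq c 0) => [cz|cn0].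
  have wn_0 : forall s, wn s = 0.
    by move=> s; move/psumr_eq0P: cz; apply.
  have wge : forall s, 0 <= w s by move=> s; rewrite wE wn_0 subr0.
  exact: (F_comb hF (leqnn _) wge wg w1).
have cpos : 0 < c by rewrite lt_neqAle eq_sym cn0 c0.
have c1 : 1 + c != 0 by rewrite lt0r_neq0 // ltr_pwDl.
pose q := fun s => wn s / c.
pose pp := fun s => wp s / (1 + c).
have q0 : forall s, 0 <= q s by move=> s; rewrite divr_ge0.
have pp0 : forall s, 0 <= pp s by move=> s; rewrite divr_ge0 // addr_ge0.
have qg : forall s, ~~ global s -> q s = 0 by move=> s /wng H; rewrite /q H mul0r.
have ppg : forall s, ~~ global s -> pp s = 0 by move=> s /wpg H; rewrite /pp H mul0r.
have q1 : \sum_s q s = 1 by rewrite -mulr_suml divff.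
have pp1 : \sum_s pp s = 1 by rewrite -mulr_suml sp divff.
have eq_ := comb_emp q0 qg q1.
have ep := comb_emp pp0 ppg pp1.
pose b := (1 + c)^-1.
have b0 : 0 <= b by rewrite invr_ge0 addr_ge0.
have b1 : b <= 1.
  rewrite invr_le1 ?lerDl ?unitfE //; by rewrite ltr_pwDl.
have Hm : mconv b (comb w) (comb q) = comb pp.
  apply/ffunP => sigma; apply/ffunP => t; rewrite /mconv !ffunE.
  rewrite !big_distrr -big_split /=; apply: eq_bigr => s _.
  rewrite /pp /q /b wE; field.
  by rewrite cn0 c1.
have := hF _ _ _ he eq_ b0 b1; rewrite Hm.
rewrite (F_comb hF (leqnn _) pp0 ppg pp1) (F_comb hF (leqnn _) q0 qg q1).
move/ffunP => H; apply/ffunP => k; have := H k; rewrite !ffunE.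
rewrite /pp /q !sum_scale => Hk.
have -> : \sum_s w s * F (delta R s) k =
   \sum_s wp s * F (delta R s) k - \sum_s wn s * F (delta R s) k.
  by rewrite -sumrB; apply: eq_bigr => s _; rewrite wE mulrBl.
move: Hk; set A := \sum_s wp s * _; set B := \sum_s wn s * _; set Fk := F _ k.
move=> Hk.
have -> : Fk = (1 + c) * (A / (1 + c) - (1 - b) * (B / c)).
  by rewrite Hk /b; field; rewrite cn0 c1.
rewrite /b; move: (A) (B) => A' B'; field; by rewrite cn0 c1.
Qed.

Lemma factorsI (S : scenario) (A : Type) (G : sec S -> A) (U V : {set sc_X S}) :
  factors_through G U -> factors_through G V -> factors_through G (U :&: V).
Proof.
move=> hU hV s s' gs gs' /eqP/restr_eqP H.
have g2 : global (glue U s s') by apply: glue_global.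
transitivity (G (glue U s s')).
  apply: hU => //; apply/eqP/restr_eqP => x xU; by rewrite glueE xU.
apply: hV => //; apply/eqP/restr_eqP => x xV; rewrite glueE; case: ifP => // xU.
by apply: H; rewrite inE xU.
Qed.

Lemma least_exists (S : scenario) (A : Type) (G : sec S -> A) (V : {set sc_X S}) :
  factors_through G V -> exists U, least_factor_set G U /\ U \subset V.
Proof.
move: {2}#|V| (leqnn #|V|) => N; elim: N V => [|N IH] V cV hV.
  exists V; split => //; split => // W _.
  by move: cV; rewrite leqn0 cards_eq0 => /eqP ->; apply: sub0set.
case: (classic (exists W, factors_through G W /\ ~~ (V \subset W))) => [[W [hW nVW]]|H].
  have hI := factorsI hV hW.
  have [U [hU UI]] : exists U, least_factor_set G U /\ U \subset V :&: W.
    apply: IH hI; rewrite -ltnS; apply: leq_trans cV.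
    by apply: proper_card; apply: properIl.
  exists U; split => //; apply: subset_trans UI (subsetIl _ _).
exists V; split => //; split => // W hW.
apply/negPn/negP => nVW; apply: H; by exists W.
Qed.

Lemma emp_det_tt (R : realType) (S : scenario) (n : nat) (hn : (0 < n)%N)
  (g : dproc S (scn hn)) (e : model R S) (k : 'I_n) :
  emp_det g e [set tt] (scn_sec hn k) =
  \sum_(t | dp_alpha g tt (restr (dp_pi g tt) t) == k :> 'I_n) e (dp_pi g tt) t.
Proof.
rewrite /emp_det !ffunE inE /dp_piset big_set1.
apply: eq_bigl => t; apply/eqP/eqP => [H|H].
  have := congr1 (fun f : sec (scn hn) => f tt) H.
  by rewrite /dp_apply /scn_sec !ffunE inE /= => [[]].
apply/ffunP => x; case: x; rewrite /dp_apply /scn_sec !ffunE inE /=.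
by rewrite H.
Qed.

Lemma piset_tt (S : scenario) (n : nat) (hn : (0 < n)%N) (g : dproc S (scn hn)) :
  is_dproc g -> dp_pi g tt \in sc_Sigma S.
Proof.
move=> hg; have := hg [set tt]; rewrite /dp_piset big_set1; apply.
by rewrite inE.
Qed.
Unset Implicit Arguments.
Theorem mainTheorem7 (R : realType) (S : scenario) (n : nat) (hn : (0 < n)%N)
  (F : model R S -> {ffun 'I_n -> R})
  (hFdist : forall e, is_emp e -> is_dist (F e))
  (hFconv : forall (e1 e2 : model R S) (a : R),
      is_emp e1 -> is_emp e2 -> 0 <= a -> a <= 1 ->
      F (mconv a e1 e2) = [ffun k => a * F e1 k + (1 - a) * F e2 k]) :
  (exists (m : nat) (r : 'I_m -> R) (f : 'I_m -> dproc S (scn hn)),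
      is_pproc r f /\
      forall e, is_emp e -> F e = emp_to_dist (emp_prob r f e))
  <->
  (exists (m : nat) (r : 'I_m -> R) (G : 'I_m -> sec S -> 'I_n),
      [/\ forall j, 0 < r j,
          \sum_j r j = 1,
          forall s, global s ->
            F (delta R s) = [ffun k => \sum_j r j * (G j s == k)%:R] &
          forall j, exists U, least_factor_set (G j) U /\ U \in sc_Sigma S]).
Proof.
have hF : Fconv F by exact: hFconv.
split.
  move=> [m [r [f [[r0 r1 fd] HF]]]].
  pose P := [pred i | 0 < r i].
  pose G' := fun i (s : sec S) => (dp_alpha (f i) tt (restr (dp_pi (f i) tt) s) : 'I_n).
  have rP : forall (X : 'I_m -> R), \sum_i r i * X i = \sum_(j < #|P|) r (enum_val j) * X (enum_val j).
    move=> X; rewrite -(big_enum_val (fun i => r i * X i)) [RHS]big_mkcond /=.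
    apply: eq_bigr => i _; rewrite inE; case: ifP => // /negbT.
    rewrite -leNgt => ri; have -> : r i = 0 by apply/eqP; rewrite eq_le ri r0.
    by rewrite mul0r.
  exists #|P|, (fun j => r (enum_val j)), (fun j => G' (enum_val j)).
  split.
  - by move=> j; have := enum_valP j; rewrite inE.
  - have := rP (fun _ => 1); under eq_bigr => i _ do rewrite mulr1.
    under [X in _ = X -> _]eq_bigr => j _ do rewrite mulr1.
    by move=> <-.
  - move=> s gs; rewrite HF; last exact: delta_emp.
    apply/ffunP => k.
    rewrite /emp_to_dist /emp_prob !ffunE -(rP (fun i => (G' i s == k)%:R)).
    apply: eq_bigr => i _; congr (_ * _); rewrite emp_det_tt.
    under eq_bigr => t _ do rewrite deltaE (piset_tt (fd i)).
    by rewrite sum_pred1 restr_id.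
  - move=> j; set i := enum_val j.
    have hf : factors_through (G' i) (dp_pi (f i) tt).
      by move=> s s' _ _ H; rewrite /G' H.
    have [U [hU sU]] := least_exists hf.
    by exists U; split => //; apply: sc_Sigma_sub sU; apply: piset_tt.
move=> [m [r [G [r0 r1 HG hU]]]].
pose U := fun j => proj1_sig (constructive_indefinite_description _ (hU j)).
have hUj : forall j, least_factor_set (G j) (U j) /\ U j \in sc_Sigma S.
  by move=> j; rewrite /U; case: constructive_indefinite_description.
pose o := o0 S.
pose f := fun j => @DProc S (scn hn) (fun _ => U j)
  (fun x t => (G j (glue (U j) t o) : sc_O x)).
exists m, r, f; split.
  split => // [i|j sigma _]; first exact: ltW.
  apply: sc_Sigma_sub (proj2 (hUj j)) _.
  by apply/bigcupsP.
move=> e he.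
have [w Hw] := signed he.
pose w' := fun s => if global s then w s else 0.
have w'g : forall s, ~~ global s -> w' s = 0 by move=> s /negbTE gs; rewrite /w' gs.
have eC : e = comb w'.
  apply/ffunP => sigma; apply/ffunP => t; rewrite combE.
  have [h1 h2 h3 h4 h5] := he.
  case sS: (sigma \in sc_Sigma S); last first.
    rewrite h1 ?sS // ffunE big1 // => s _.
    by rewrite deltaE sS mulr0.
  under eq_bigr => s _ do rewrite deltaE sS.
  rewrite sum_ind.
  case: (eqVneq (dom t) sigma) => dt.
    by rewrite (Hw _ _ sS dt) /marg big_mkcondl.
  rewrite h3 ?dt // big1 // => s /eqP rs.
  case gs: (global s); last by rewrite /w' gs.
  by move: dt; rewrite -rs dom_restr ?eqxx.
have [h1 h2 h3 h4 h5] := he.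
have w1 : \sum_s w' s = 1.
  pose t0 := restr set0 o.
  have dt0 : dom t0 = set0 by rewrite dom_restr //; exact: o0_global.
  have rt0 : forall s, restr set0 s = t0.
    by move=> s; apply/eqP/restr_eqP => x; rewrite inE.
  have e0 : e set0 t0 = 1.
    rewrite -(h4 set0 (sc_Sigma0 S)) (bigD1 t0) //= big1 ?addr0 // => u ut0.
    apply: h3; first exact: sc_Sigma0.
    apply: contra ut0 => /eqP du; by rewrite -(restr_dom u) du rt0.
  rewrite -e0 (Hw _ _ (sc_Sigma0 S) dt0) /marg [RHS]big_mkcond /=.
  by apply: eq_bigr => s _; rewrite /w' rt0 eqxx andbT.
have hF' := F_affine hF w'g w1; rewrite -eC in hF'.
rewrite (hF' he); apply/ffunP => k.
rewrite /emp_to_dist /emp_prob !ffunE.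
transitivity (\sum_s w' s * \sum_j r j * (G j s == k)%:R).
  apply: eq_bigr => s _; case gs: (global s); last by rewrite /w' gs !mul0r.
  by rewrite HG // ffunE.
rewrite (eq_bigr (fun s => \sum_j w' s * (r j * (G j s == k)%:R))); last first.
  by move=> s _; rewrite big_distrr.
rewrite exchange_big /=; apply: eq_bigr => j _.
rewrite emp_det_tt /=.
have Uj := proj2 (hUj j).
have fj := proj1 (proj1 (hUj j)).
rewrite eC.
rewrite [X in _ = _ * X](eq_bigr (fun t => \sum_s w' s * (restr (U j) s == t)%:R)); last first.
  by move=> t _; rewrite combE; apply: eq_bigr => s _; rewrite deltaE Uj.
rewrite exchange_big /= big_distrr /=; apply: eq_bigr => s _.
rewrite -big_distrr /= sum_pred1 mulrCA; congr (_ * _).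
case gs: (global s); last by rewrite /w' gs !mul0r.
rewrite restr_id; congr (_ * (_ == _)%:R).
have -> : glue (U j) (restr (U j) s) o = glue (U j) s o.
  by apply/ffunP => x; rewrite !glueE restrE; case: (x \in U j).
apply: fj => //; first by apply: glue_global => //; exact: o0_global.
by rewrite restr_glue.
Qed.
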